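(* Let $\alpha,\beta,\gamma\in\mathbb{Z}[i]$ satisfy $\alpha^2+\beta^2+\gamma^2=0$, $\alpha\beta\gamma\neq0$ and $\gcd(\alpha,\beta,\gamma)\in U$. Then $\alpha\beta\gamma\equiv0\pmod{(1+i)^2}$.
   Context: $\mathbb{Z}[i]$ is the ring of Gaussian integers, $U=\{1,-1,i,-i\}$ its unit group; $\gcd(\alpha,\beta,\gamma)\in U$ means the three have no common non-unit divisor. *)

(* Defs.v *)
(* Gaussian integers Z[i] realised inside algC. *)
From mathcomp Require Import all_boot all_algebra all_field.
Import GRing.Theory Num.Theory.
Set Implicit Arguments. Unset Strict Implicit. Unset Printing Implicit Defensive.
Local Open Scope ring_scope.

Definition gaussian (z : algC) : bool :=
  ('Re z \is a Num.int) && ('Im z \is a Num.int).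

Definition gdvd (d x : algC) : Prop := exists2 q, gaussian q & x = q * d.

Definition gunit (u : algC) : Prop := u = 1 \/ u = -1 \/ u = 'i \/ u = - 'i.

(* gcd(a,b,c) \in U: every Gaussian common divisor of a, b, c is a unit. *)
Definition gcoprime3 (a b c : algC) : Prop :=
  forall d, gaussian d -> gdvd d a -> gdvd d b -> gdvd d c -> gunit d.

(* Main.v *)
Require Import Defs.
From mathcomp Require Import all_boot all_algebra all_field.
From mathcomp Require Import zify ring lra.
Import GRing.Theory Num.Theory.
Local Open Scope ring_scope.
Lemma par (x : int) : exists k, x = 2*k \/ x = 2*k+1.
Proof. exists (x %/ 2)%Z. lia. Qed.

Lemma core (p q r s t u : int) :
 p*p - q*q + r*r - s*s + t*t - u*u = 0 ->
 p*q + r*s + t*u = 0 ->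
 ~ (((p+q) %% 2 = 0)%Z /\ ((r+s) %% 2 = 0)%Z /\ ((t+u) %% 2 = 0)%Z) ->
 (((p*r-q*s)*t - (p*s+q*r)*u) %% 2 = 0)%Z /\ (((p*r-q*s)*u + (p*s+q*r)*t) %% 2 = 0)%Z.
Proof.
have [p' [->|->]] := par p; have [q' [->|->]] := par q;
have [r' [->|->]] := par r; have [s' [->|->]] := par s;
have [t' [->|->]] := par t; have [u' [->|->]] := par u; lia.
Qed.

Lemma rect_real (x y : int) : ('Re (x%:~R + 'i * y%:~R : algC) = x%:~R) /\ ('Im (x%:~R + 'i * y%:~R : algC) = y%:~R).
Proof. by split; [rewrite Re_rect | rewrite Im_rect] => //; apply: Rreal_int; apply: intr_int. Qed.

Lemma rect_inj (x y x' y' : int) : (x%:~R + 'i * y%:~R : algC) = x'%:~R + 'i * y'%:~R -> x = x' /\ y = y'.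
Proof.
move=> h; have [h1 h2] := rect_real x y; have [h3 h4] := rect_real x' y'.
split; apply/eqP; rewrite -(eqr_int algC).
  by rewrite -h1 -h3 h.
by rewrite -h2 -h4 h.
Qed.

Lemma gaussE (x y : int) : gaussian (x%:~R + 'i * y%:~R).
Proof. by have [h1 h2] := rect_real x y; rewrite /gaussian h1 h2 !intr_int. Qed.

Lemma gaussP (z : algC) : gaussian z -> exists x y : int, z = x%:~R + 'i * y%:~R.
Proof.
case/andP=> /intrP [x hx] /intrP [y hy]; exists x, y.
by rewrite {1}[z]algCrect hx hy.
Qed.

Lemma dvd1i (p q : int) : ((p+q) %% 2 = 0)%Z -> gdvd (1+'i) (p%:~R + 'i*q%:~R).
Proof.
move=> h; set k1 := ((p+q) %/ 2)%Z; set k2 := ((q-p) %/ 2)%Z.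
have e1 : p = k1 - k2 by rewrite /k1 /k2; lia.
have e2 : q = k1 + k2 by rewrite /k1 /k2; lia.
exists (k1%:~R + 'i * k2%:~R); first exact: gaussE.
rewrite e1 e2 !rmorphD !rmorphN /=.
have hi := @sqrCi algC. ring: hi.
Qed.

Lemma not_unit : ~ gunit (1 + 'i).
Proof.
have e : forall x y : int,
  (1%:~R + 'i * 1%:~R : algC) = x%:~R + 'i * y%:~R -> ~ (x = 1 /\ y = 1) -> False.
  by move=> x y /rect_inj [<- <-]; apply.
have E1 : (1 + 'i : algC) = 1%:~R + 'i * 1%:~R by rewrite mulr1.
rewrite /gunit E1; case=> [h|[h|[h|h]]].
- apply: (e 1 0); [by rewrite h mulr0 addr0 | by case].
- apply: (e (-1) 0); [by rewrite h mulr0 addr0 rmorphN | by case].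
- apply: (e 0 1); [by rewrite h mulr1 add0r | by case].
- apply: (e 0 (-1)); [by rewrite h add0r rmorphN mulrN mulr1 | by case].
Qed.

Theorem lemma4p1 (a b c : algC) :
  gaussian a -> gaussian b -> gaussian c ->
  a ^+ 2 + b ^+ 2 + c ^+ 2 = 0 ->
  a * b * c != 0 ->
  gcoprime3 a b c ->
  gdvd ((1 + 'i) ^+ 2) (a * b * c).
Proof.
move=> /gaussP [p [q ->]] /gaussP [r [s ->]] /gaussP [t [u ->]] hsum _ hcop.
have hi := @sqrCi algC.
have hs : ((p*p - q*q + r*r - s*s + t*t - u*u)%:~R + 'i * (2*(p*q + r*s + t*u))%:~R : algC) = 0%:~R + 'i * 0%:~R.
  transitivity (0:algC); last by rewrite mulr0 addr0.
  rewrite -hsum !rmorphD !rmorphN !rmorphM /=. ring: hi.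
have [h1 h2] := rect_inj _ _ _ _ hs.
have h2' : p*q + r*s + t*u = 0 by lia.
have h3 : ~ (((p+q) %% 2 = 0)%Z /\ ((r+s) %% 2 = 0)%Z /\ ((t+u) %% 2 = 0)%Z).
  move=> [ha [hb hc]]; apply: not_unit; apply: hcop.
  - by have := gaussE 1 1; rewrite mulr1.
  - exact: dvd1i.
  - exact: dvd1i.
  - exact: dvd1i.
have [e1 e2] := core _ _ _ _ _ _ h1 h2' h3.
set R := ((p*r-q*s)*t - (p*s+q*r)*u) in e1.
set I := ((p*r-q*s)*u + (p*s+q*r)*t) in e2.
have hR : R = 2 * (R %/ 2)%Z by lia.
have hI : I = 2 * (I %/ 2)%Z by lia.
exists ((I %/ 2)%Z%:~R + 'i * (- (R %/ 2)%Z)%:~R); first exact: gaussE.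
have -> : ((p%:~R + 'i * q%:~R) * (r%:~R + 'i * s%:~R) * (t%:~R + 'i * u%:~R) : algC)
   = R%:~R + 'i * I%:~R.
  rewrite /R /I !rmorphD !rmorphN !rmorphM /=. ring: hi.
rewrite {1}hR {1}hI !rmorphM rmorphN /=. ring: hi.
Qed.
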